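(* Let $n$ be odd, let $k$ be a positive integer with $\gcd(k,n)=1$, let $L=GF(2^n)$, and let $t\in\{2,3\}$. For all $a\in L$ and $b,c\in L^*$, $$F^w(a,b,c)=\sum_{x\in L}(-1)^{\mathrm{Tr}\left(ax+bx^{2^k+1}+cx^{2^{tk}+1}\right)}\in\left\{0,\ \pm2^{\frac{n+1}{2}},\ \pm 2^{\frac{n+3}{2}}\right\}.$$
   Context: $\mathrm{Tr}$ denotes the absolute trace from $GF(2^n)$ to $GF(2)$, $\mathrm{Tr}(x)=\sum_{i=0}^{n-1}x^{2^i}$; $L^*=L\setminus\{0\}$. *)

(* Defs.v *)
From HB Require Import structures.
From mathcomp Require Import all_boot all_order all_algebra all_field.
Set Implicit Arguments. Unset Strict Implicit. Unset Printing Implicit Defensive.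
Import GRing.Theory.
Local Open Scope ring_scope.

(* Absolute trace GF(2^n) -> GF(2): Tr(x) = sum_{i<n} x^(2^i), an element of L
   (it lies in the prime field {0,1}). *)
Definition absTr (L : finFieldType) (n : nat) (x : L) : L :=
  \sum_(i < n) x ^+ (2 ^ i)%N.

(* (-1)^(Tr x) as an integer: Tr x is 0 or 1 in GF(2). *)
Definition trSign (L : finFieldType) (n : nat) (x : L) : int :=
  if absTr n x == 0 then 1 else -1.

Definition Fw (L : finFieldType) (n k t : nat) (a b c : L) : int :=
  \sum_(x : L) trSign n (a * x + b * x ^+ (2 ^ k + 1)%N + c * x ^+ (2 ^ (t * k) + 1)%N).

(* Main.v *)
Require Import Defs.
From HB Require Import structures.
From mathcomp Require Import all_boot all_order all_algebra all_field all_fingroup.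
From Stdlib Require Import Lia.
Import GRing.Theory.
Local Open Scope ring_scope.

Set Implicit Arguments. Unset Strict Implicit.

Section Frob.
Variable (L : finFieldType) (n : nat).
Hypothesis ch2 : 2 \in [pchar L].
Hypothesis hL : #|L| = (2 ^ n)%N.
Hypothesis hn : (0 < n)%N.

Definition fr (j : nat) (x : L) := x ^+ (2 ^ j).

Lemma sqD (x y : L) : (x + y) ^+ 2 = x ^+ 2 + y ^+ 2.
Proof. by rewrite sqrrD (mulrn_pchar ch2) addr0. Qed.

Lemma frS j x : fr j.+1 x = fr j (x ^+ 2).
Proof. by rewrite /fr expnS exprM. Qed.

Lemma frD j x y : fr j (x + y) = fr j x + fr j y.
Proof. elim: j x y => [|j IH] x y; first by rewrite /fr !expr1.
by rewrite !frS sqD IH. Qed.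

Lemma fr0 j : fr j 0 = 0.
Proof. by rewrite /fr expr0n expn_eq0. Qed.

Lemma frM j x y : fr j (x * y) = fr j x * fr j y.
Proof. by rewrite /fr exprMn. Qed.

Lemma frfr i j x : fr i (fr j x) = fr (j + i) x.
Proof. by rewrite /fr -exprM -expnD. Qed.

Lemma fr_0 x : fr 0 x = x.
Proof. by rewrite /fr expr1. Qed.

Lemma frN j x : fr j (- x) = - fr j x.
Proof. by rewrite !(oppr_pchar2 ch2). Qed.

Lemma frB j x y : fr j (x - y) = fr j x - fr j y.
Proof. by rewrite frD frN. Qed.

Lemma fr_eq0 j x : (fr j x == 0) = (x == 0).
Proof. by rewrite /fr expf_eq0 expn_gt0. Qed.

Lemma frn x : fr n x = x.
Proof. by rewrite /fr -hL expf_card. Qed.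

Lemma fr_nm m x : fr (n * m) x = x.
Proof. elim: m => [|m IH]; first by rewrite muln0 fr_0.
by rewrite mulnS addnC -frfr IH frn. Qed.

Lemma fr_add_nm m j x : fr (j + n * m) x = fr j x.
Proof. by rewrite -frfr fr_nm. Qed.

Lemma fr_sum j (I : Type) (r : seq I) (P : pred I) (F : I -> L) :
  fr j (\sum_(i <- r | P i) F i) = \sum_(i <- r | P i) fr j (F i).
Proof. exact: (big_morph _ (frD j) (fr0 j)). Qed.

Lemma fr1 j : fr j 1 = 1.
Proof. by rewrite /fr expr1n. Qed.

Definition Tr (x : L) := \sum_(i < n) fr i x.

Lemma TrE x : absTr n x = Tr x. Proof. by []. Qed.

Lemma TrD x y : Tr (x + y) = Tr x + Tr y.
Proof. by rewrite /Tr -big_split; apply: eq_bigr => i _; rewrite frD. Qed.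

Lemma Tr_fr1 x : Tr (fr 1 x) = Tr x.
Proof.
have [m hm] : exists m, n = m.+1 by case: (n) hn => // m _; exists m.
rewrite /Tr hm big_ord_recr [in RHS]big_ord_recl /= fr_0.
have -> : fr m (fr 1 x) = x by rewrite frfr add1n -hm frn.
rewrite addrC; congr (_ + _); apply: eq_bigr => i _.
by rewrite frfr /bump /= add1n.
Qed.

Lemma Tr_fr j x : Tr (fr j x) = Tr x.
Proof. elim: j => [|j IH]; first by rewrite fr_0.
by rewrite -addn1 -frfr Tr_fr1 IH. Qed.

Lemma Tr01 x : Tr x = 0 \/ Tr x = 1.
Proof.
have h : Tr x ^+ 2 = Tr x.
  rewrite -[_ ^+ 2]expr1 -[in LHS](expn1 2) -/(fr 1 _) /Tr fr_sum.
  rewrite -[RHS](Tr_fr1 x) /Tr; apply: eq_bigr => i _; by rewrite !frfr addnC.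
have : Tr x * (Tr x - 1) == 0 by rewrite mulrBr mulr1 -expr2 h subrr.
rewrite mulf_eq0 subr_eq0 => /orP [] /eqP ->; by [left|right].
Qed.

Definition sg (x : L) : int := trSign n x.

Lemma sgE x : sg x = if Tr x == 0 then 1 else -1. Proof. by []. Qed.

Lemma sgD x y : sg (x + y) = sg x * sg y.
Proof.
rewrite !sgE TrD.
have h11 : (1 : L) + 1 = 0 by rewrite (addrr_pchar2 ch2).
case: (Tr01 x) => ->; case: (Tr01 y) => ->;
  rewrite ?addr0 ?add0r ?h11 ?eqxx ?oner_eq0 //=.
Qed.

Lemma sg_sq x : sg x * sg x = 1.
Proof. by rewrite sgE; case: ifP => _; rewrite ?mulr1 ?mulrNN ?mulr1. Qed.

Lemma sg_eqTr x y : Tr x = Tr y -> sg x = sg y.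
Proof. by rewrite !sgE => ->. Qed.

Lemma sg_fr j x : sg (fr j x) = sg x.
Proof. by apply: sg_eqTr; rewrite Tr_fr. Qed.

Lemma sg0 : sg 0 = 1.
Proof. by rewrite sgE /Tr big1 ?eqxx // => i _; rewrite fr0. Qed.

Lemma sg_pm x : sg x = 1 \/ sg x = -1.
Proof. rewrite sgE; case: ifP => _; by [left|right]. Qed.

End Frob.


Lemma int_selfopp (S : int) : S = - S -> S = 0.
Proof.
move=> h; apply/eqP.
have : S * 2 == 0 by rewrite mulrDr mulr1 {1}h addNr.
by rewrite mulf_eq0 orbF.
Qed.

Section Sums.
Variable (L : finFieldType) (n : nat).
Hypothesis ch2 : 2 \in [pchar L].
Hypothesis hL : #|L| = (2 ^ n)%N.
Hypothesis hn : (0 < n)%N.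

Lemma Tr_nontriv : exists x0 : L, Tr n x0 = 1.
Proof.
case: (pickP (fun x : L => Tr n x != 0)) => [x0 hx0|hall].
  exists x0; case: (Tr01 ch2 hL hn x0) => h //; by rewrite h eqxx in hx0.
exfalso.
have [m hm] : exists m, n = m.+1 by case: (n) hn => // m _; exists m.
pose P : {poly L} := \sum_(i < n) 'X^(2 ^ i).
have hP : forall x, P.[x] = Tr n x.
  by move=> x; rewrite horner_sum; apply: eq_bigr => i _; rewrite hornerXn.
have hsz : size P = (2 ^ m).+1.
  rewrite /P hm big_ord_recr /= addrC size_polyDl size_polyXn //.
  apply: leq_ltn_trans (size_sum _ _ _) _.
  rewrite ltnS; apply/bigmax_leqP => i _; rewrite size_polyXn.
  by rewrite ltn_exp2l.
have P0 : P != 0 by rewrite -size_poly_eq0 hsz.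
have := max_poly_roots P0 (rs := enum L).
rewrite enum_uniq -cardE hL hsz hm expnS.
have -> : all (root P) (enum L).
  by apply/allP => x _; rewrite /root hP; move: (hall x) => /= /negbFE.
move=> /(_ isT isT); by rewrite ltnS leqNgt ltn_Pmull ?expn_gt0.
Qed.

Lemma sum_sg : \sum_(x : L) sg n x = 0.
Proof.
have [x0 hx0] := Tr_nontriv.
apply: int_selfopp.
rewrite [LHS](reindex_inj (addIr x0)) /= -sumrN; apply: eq_bigr => x _.
by rewrite (sgD ch2 hL hn) (sgE n x0) hx0 oner_eq0 /= mulrN1.
Qed.

Lemma sum_sg_mul r : \sum_(x : L) sg n (x * r) = if r == 0 then (2 ^ n)%:R else 0.
Proof.
case: ifP => [/eqP -> | /negbT hr].
  under eq_bigr do rewrite mulr0 (sg0 L n).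
  by rewrite sumr_const hL.
by have := sum_sg; rewrite (reindex_inj (mulIf hr)).
Qed.

End Sums.

Lemma subswap (V : zmodType) (a b c d : V) : a - b = c - d -> a - c = b - d.
Proof.
move=> h; by rewrite -[a](subrK b) h -(addrA c) addrAC subrr add0r addrC.
Qed.
Lemma abel (R : comNzRingType) (a Y : nat -> R) N :
  \sum_(i < N.+1) a i * Y i =
  \sum_(s < N) (\sum_(i < s.+1) a i) * (Y s - Y s.+1) + (\sum_(i < N.+1) a i) * Y N.
Proof.
elim: N => [|N IH]; first by rewrite !big_ord1 big_ord0 add0r.
rewrite big_ord_recr /= IH [in RHS]big_ord_recr /= [in X in _ = _ + X * _]big_ord_recr /=.
set A := \sum_(i < N.+1) a i.
by rewrite mulrBr mulrDl -!addrA addKr.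
Qed.

Section Ker.
Variable (L : finFieldType) (n : nat).
Hypothesis ch2 : 2 \in [pchar L].
Hypothesis hL : #|L| = (2 ^ n)%N.
Hypothesis hn : (0 < n)%N.

Lemma fr_iter j a (y : L) : fr j y = y -> fr (j * a) y = y.
Proof.
move=> h; elim: a => [|a IH]; first by rewrite muln0 fr_0.
by rewrite mulnS addnC -frfr IH h.
Qed.

Lemma fr_fix j (y : L) : coprime j n -> fr j y = y -> y = 0 \/ y = 1.
Proof.
move=> hj hy.
have [a _ /dvdnP [l hl]] := Bezoutr j hn.
rewrite (eqP hj) in hl.
have h2 : y ^+ 2 = y.
  have -> : y ^+ 2 = fr 1 (fr (j * a) y) by rewrite fr_iter // /fr expn1.
  by rewrite frfr mulnC addnC hl mulnC (fr_nm hL).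
have : y * (y - 1) == 0 by rewrite mulrBr mulr1 -expr2 h2 subrr.
rewrite mulf_eq0 subr_eq0 => /orP [] /eqP ->; by [left|right].
Qed.

Definition kset j d (cf : nat -> L) :=
  [set x : L | \sum_(i < d.+1) cf i * fr (j * i) x == 0].

Lemma ker_bound j (hj : coprime j n) d :
  forall cf : nat -> L, cf d != 0 -> (#|kset j d cf| <= 2 ^ d)%N.
Proof.
elim: d => [|d IH] cf hcf.
  apply: leq_trans (subset_leq_card (_ : kset j 0 cf \subset [set 0])) _.
    apply/subsetP => x; rewrite !inE big_ord1 muln0 fr_0 mulf_eq0 (negbTE hcf) //=.
  by rewrite cards1.
case: (pickP [pred x | (x \in kset j d.+1 cf) && (x != 0)]) => [v /andP [hv hv0] | hnone]; last first.
  apply: leq_trans (subset_leq_card (_ : kset j d.+1 cf \subset [set 0])) _.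
    apply/subsetP => x hx; rewrite inE; move: (hnone x) => /=; rewrite hx /=.
    by move/negbFE.
  by rewrite cards1 expn_gt0.
pose a i := cf i * fr (j * i) v.
pose A s := \sum_(i < s.+1) a i.
pose e s := - A s.
have hA : A d.+1 = 0 by move: hv; rewrite inE => /eqP.
have he : e d != 0.
  move: hA; rewrite /A big_ord_recr /= -/(A d) => /eqP; rewrite addr_eq0 => /eqP hAd.
  by rewrite /e hAd opprK /a mulf_neq0 // fr_eq0.
have key : forall y, \sum_(i < d.+2) cf i * fr (j * i) (v * y) =
    \sum_(s < d.+1) e s * fr (j * s) (fr j y - y).
  move=> y.
  have -> : \sum_(i < d.+2) cf i * fr (j * i) (v * y) = \sum_(i < d.+2) a i * fr (j * i) y.
    by apply: eq_bigr => i _; rewrite frM mulrA.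
  rewrite (abel a (fun i => fr (j * i) y)) -/(A d.+1) hA mul0r addr0.
  apply: eq_bigr => s _.
  by rewrite (frB ch2) frfr -mulnS /e mulNr -mulrN opprB.
pose g x := (fr j (x / v) - x / v, ltn (enum_rank (x / v)) (enum_rank (x / v + 1))).
have ginj : injective g.
  move=> x1 x2; rewrite /g; case=> h1 h2.
  set y1 := x1 / v in h1 h2; set y2 := x2 / v in h1 h2.
  have hfix : fr j (y1 - y2) = y1 - y2 by rewrite (frB ch2); apply: subswap.
  suff : y1 = y2 by move=> e12; rewrite -(divfK hv0 x1) -(divfK hv0 x2) -/y1 -/y2 e12.
  case: (fr_fix hj hfix) => [/subr0_eq // | h12].
  exfalso.
  have e1 : y1 = y2 + 1 by rewrite -h12 addrC subrK.
  have e2 : y2 = y1 + 1 by rewrite e1 -addrA (addrr_pchar2 ch2) addr0.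
  rewrite -e1 -e2 in h2.
  have hne : enum_rank y1 != enum_rank y2.
    apply/negP => /eqP /enum_rank_inj h.
    by move: e1; rewrite h -{1}(addr0 y2) => /addrI /eqP; rewrite eq_sym oner_eq0.
  move: hne h2; case: ltngtP => // /val_inj ->; by rewrite eqxx.
have gK : forall x, x \in kset j d.+1 cf -> g x \in setX (kset j d e) [set: bool].
  move=> x hx; rewrite !inE andbT -key mulrC divfK //.
  by move: hx; rewrite inE.
rewrite -(card_imset _ ginj).
apply: leq_trans (subset_leq_card (_ : g @: kset j d.+1 cf \subset setX (kset j d e) [set: bool])) _.
  by apply/subsetP => z /imsetP [x hx ->]; exact: gK.
by rewrite cardsX cardsT card_bool expnS mulnC leq_mul2l /= IH.
Qed.

End Ker.


Lemma reorg (V : zmodType) (p1 p2 q1 q2 q3 r1 r2 r3 : V) :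
  p1 + p2 + (q1 + q2 + q3) + (r1 + r2 + r3) =
  (p1 + q1 + r1) + (p2 + q2 + r2) + (q3 + r3).
Proof.
by rewrite (addrA (p1 + p2)) (addrACA p1) (addrACA (p1 + q1 + (p2 + q2))) (addrACA (p1 + q1)).
Qed.

Section Main.
Variable (L : finFieldType) (n : nat).
Hypothesis ch2 : 2 \in [pchar L].
Hypothesis hL : #|L| = (2 ^ n)%N.
Hypothesis hn : (0 < n)%N.

Definition Rj j (b u : L) := fr (n * j - j) (b * u) + b * fr j u.

Lemma RjD j b x y : Rj j b (x + y) = Rj j b x + Rj j b y.
Proof.
rewrite /Rj mulrDr !(frD ch2) mulrDr.
by rewrite -!addrA; congr (_ + _); rewrite addrCA.
Qed.

Lemma Rj0 j b : Rj j b 0 = 0.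
Proof. by rewrite /Rj mulr0 !fr0 mulr0 addr0. Qed.

Lemma Tr_swap j (b x u : L) : Tr n (b * fr j x * u) = Tr n (x * fr (n * j - j) (b * u)).
Proof.
rewrite -(Tr_fr hL hn (n * j - j)) !frM frfr subnKC ?leq_pmull //.
by rewrite (fr_nm hL) [_ * x]mulrC -mulrA [x * _]mulrC.
Qed.

Lemma expand j (b x u : L) :
  Tr n (b * (x + u) ^+ (2 ^ j + 1)) =
  Tr n (b * x ^+ (2 ^ j + 1) + b * u ^+ (2 ^ j + 1) + x * Rj j b u).
Proof.
have hp : forall y : L, y ^+ (2 ^ j + 1) = fr j y * y by move=> y; rewrite exprD expr1.
rewrite !hp (frD ch2) !mulrDl !mulrDr /Rj.
rewrite !(TrD n ch2) (mulrA b (fr j x) u) Tr_swap.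
have -> : b * (fr j u * x) = x * (b * fr j u) by rewrite [fr j u * x]mulrC mulrCA.
by rewrite -!addrA; congr (_ + _); rewrite addrA addrC.
Qed.

Variables (k tk : nat) (a b c : L).

Definition ff (x : L) := a * x + b * x ^+ (2 ^ k + 1) + c * x ^+ (2 ^ tk + 1).
Definition RR (u : L) := Rj k b u + Rj tk c u.

Lemma RRD x y : RR (x + y) = RR x + RR y.
Proof. by rewrite /RR !RjD addrACA. Qed.

Lemma RR0 : RR 0 = 0.
Proof. by rewrite /RR !Rj0 addr0. Qed.

Lemma ff_add x u : sg n (ff (x + u)) = sg n (ff x) * sg n (ff u) * sg n (x * RR u).
Proof.
rewrite -!(sgD ch2 hL hn); apply: sg_eqTr.
rewrite /ff !(TrD n ch2) !expand (mulrDr a).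
rewrite -!(TrD n ch2); congr (Tr n _).
by rewrite /RR (mulrDr x (Rj k b u)) reorg.
Qed.

Definition WW := [set u : L | RR u == 0].

Lemma Fw_sq : (\sum_(x : L) sg n (ff x)) * (\sum_(x : L) sg n (ff x)) =
   (2 ^ n)%:Z * \sum_(u in WW) sg n (ff u).
Proof.
rewrite mulr_suml.
transitivity (\sum_(x : L) \sum_(u : L) sg n (ff u) * sg n (x * RR u)).
  apply: eq_bigr => x _.
  rewrite [X in _ * X](reindex_inj (addrI x)) /= mulr_sumr; apply: eq_big => // u _.
  by rewrite ff_add !mulrA sg_sq mul1r.
rewrite exchange_big /= mulr_sumr [RHS]big_mkcond /=; apply: eq_bigr => u _.
rewrite -mulr_sumr (sum_sg_mul ch2 hL hn) inE.
by case: ifP => _; rewrite ?mulr0 // mulrC natz.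
Qed.

Lemma T_cases : \sum_(u in WW) sg n (ff u) = 0 \/ \sum_(u in WW) sg n (ff u) = (#|WW|)%:R.
Proof.
case: (pickP (fun u => (u \in WW) && (sg n (ff u) == -1))) => [w0 /andP [hw0 hs] | hnone].
  have hw : RR w0 = 0 by move: hw0; rewrite inE => /eqP.
  left; apply: int_selfopp.
  rewrite [LHS](reindex_inj (addIr w0)) /= -sumrN.
  apply: eq_big => u; first by rewrite !inE RRD hw addr0.
  by move=> _; rewrite ff_add (eqP hs) hw mulr0 (sg0 L n) mulrN1 mulr1.
right; rewrite -sumr_const; apply: eq_bigr => u hu.
case: (sg_pm n (ff u)) => // hm.
by move: (hnone u); rewrite hu hm eqxx.
Qed.

End Main.


Section Grp.
Variable (L : finFieldType) (n : nat).
Hypothesis ch2 : 2 \in [pchar L].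
Hypothesis hL : #|L| = (2 ^ n)%N.
Hypothesis hn : (0 < n)%N.
Variables (k tk : nat) (a b c : L).

Lemma WW_pow : exists2 r, (r <= n)%N & #|WW n k tk b c| = (2 ^ r)%N.
Proof.
have gW : group_set (WW n k tk b c).
  apply/group_setP; split; first by rewrite inE FinRing.Theory.zmod1gE (RR0 n k tk b c).
  move=> x y; rewrite !inE FinRing.Theory.zmodMgE (RRD n ch2) => /eqP -> /eqP ->; by rewrite addr0.
have := cardSg (subsetT (Group gW)).
rewrite cardsT hL => /(dvdn_pfactor _ _ (isT : prime 2)) [r hr e].
by exists r.
Qed.

Lemma WW_t2 : tk = (2 * k)%N -> b != 0 -> c != 0 -> coprime k n ->
  (#|WW n k tk b c| <= 2 ^ 4)%N.
Proof.
move=> htk hb hc hkn.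
pose cf := fun i => nth 0 [:: c; fr k b; 0; fr (2 * k) b; fr (2 * k) c] i.
apply: leq_trans (subset_leq_card (_ : WW n k tk b c \subset kset k 4 cf)) _; last first.
  by apply: (ker_bound ch2 hL hn hkn); rewrite /cf /= fr_eq0.
apply/subsetP => u; rewrite /kset !inE => /eqP hu.
have : fr (2 * k) (RR n k tk b c u) = 0 by rewrite hu fr0.
rewrite /RR /Rj htk !(frD ch2) !frM !frfr => h.
apply/eqP; rewrite -[RHS]h !big_ord_recr big_ord0 /=.
have hk : (k <= n * k)%N by rewrite leq_pmull.
have hk2 : (2 * k <= n * (2 * k))%N by rewrite leq_pmull.
have E1 : (n * k - k + 2 * k = k + n * k)%N.
  by rewrite mul2n -addnn addnA subnK // addnC.
have E2 : (n * (2 * k) - 2 * k + 2 * k = 0 + n * (2 * k))%N by rewrite subnK.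
have E3 : (k + 2 * k = k * 3)%N by rewrite -[3%N]/(1 + 2)%N mulnDr muln1 [(2 * k)%N]mulnC.
have E4 : (2 * k + 2 * k = k * 4)%N by rewrite -[4%N]/(2 + 2)%N mulnDr [(2 * k)%N]mulnC.
rewrite E1 E2 E3 E4 !(fr_add_nm hL) fr_0 muln0 muln1 fr_0 /cf /= mul0r addr0 add0r.
by rewrite -!addrA addrCA; congr (_ + _); rewrite addrCA.
Qed.

Lemma WW_t3 : tk = (3 * k)%N -> b != 0 -> c != 0 -> coprime k n -> odd n ->
  (#|WW n k tk b c| <= 2 ^ 3)%N.
Proof.
move=> htk hb hc hkn hno.
have hkn2 : coprime (2 * k) n by rewrite coprimeMl hkn coprime2n hno.
pose cf := fun i => nth 0 [:: c; fr (2 * k) b; fr (3 * k) b; fr (3 * k) c] i.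
apply: leq_trans (subset_leq_card (_ : WW n k tk b c \subset kset (2 * k) 3 cf)) _; last first.
  by apply: (ker_bound ch2 hL hn hkn2); rewrite /cf /= fr_eq0.
apply/subsetP => u; rewrite /kset !inE => /eqP hu.
have : fr (3 * k) (RR n k tk b c u) = 0 by rewrite hu fr0.
rewrite /RR /Rj htk !(frD ch2) !frM !frfr => h.
apply/eqP; rewrite -[RHS]h !big_ord_recr big_ord0 /=.
have hk : (k <= n * k)%N by rewrite leq_pmull.
have hk2 : (3 * k <= n * (3 * k))%N by rewrite leq_pmull.
have E1 : (n * k - k + 3 * k = 2 * k + n * k)%N.
  set m := (n * k)%N. move/leP: hk => hk'. rewrite -!multE -!plusE -!minusE. lia.
have E2 : (n * (3 * k) - 3 * k + 3 * k = 0 + n * (3 * k))%N by rewrite subnK.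
have E3 : (k + 3 * k = 2 * k * 2)%N by rewrite -!multE -!plusE; lia.
have E4 : (3 * k + 3 * k = 2 * k * 3)%N by rewrite -!multE -!plusE; lia.
rewrite E1 E2 E3 E4 !(fr_add_nm hL) fr_0 muln0 muln1 fr_0 /cf /= add0r.
by rewrite -!addrA addrCA; congr (_ + _); rewrite addrCA.
Qed.
End Grp.


Lemma nopar (F : int) e : odd e -> F * F <> (2 ^ e)%N%:Z.
Proof.
move=> he hF.
have hN : (`|F| * `|F| = 2 ^ e)%N by rewrite -abszM hF.
have Npos : (0 < `|F|)%N.
  by rewrite lt0n; apply/negP => /eqP h0; move: hN; rewrite h0 muln0 => /esym /eqP; rewrite expn_eq0.
have := congr1 (logn 2) hN.
rewrite lognM // pfactorK // addnn => h.
by move: he; rewrite -h odd_double.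
Qed.

Lemma final (n r : nat) (F : int) : odd n -> (r <= 4)%N ->
  (F * F = 0 \/ F * F = (2 ^ n)%N%:Z * (2 ^ r)%N%:Z) ->
  F \in [:: 0; (2 ^ n.+1./2)%:Z; - (2 ^ n.+1./2)%:Z;
            (2 ^ n.+3./2)%:Z; - (2 ^ n.+3./2)%:Z].
Proof.
move=> hn hr [h0 | h].
  by move/eqP: h0; rewrite mulf_eq0 orbb => /eqP ->; rewrite inE eqxx.
have [m hm] : exists m, n = (m.*2).+1.
  by exists n./2; rewrite -[LHS](odd_double_half n) hn.
rewrite -PoszM -expnD in h.
have sq : forall e, (n + r = e.*2)%N -> F = (2 ^ e)%N%:Z \/ F = - (2 ^ e)%N%:Z.
  move=> e he; move: h; rewrite he -addnn expnD PoszM -!expr2 => /eqP.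
  by rewrite eqf_sqr => /orP [] /eqP ->; [left|right].
rewrite hm /= doubleK !inE.
case: r hr h sq => [|[|[|[|[|r]]]]] // _ h sq.
  by case: (nopar (F := F) (e := n + 0) _ h) => //; rewrite addn0.
  case: (sq m.+1); first by rewrite hm addn1 doubleS.
    by move=> ->; rewrite eqxx ?orbT.
  by move=> ->; rewrite eqxx ?orbT.
  by case: (nopar (F := F) (e := n + 2) _ h) => //; rewrite oddD hn.
  case: (sq m.+2); first by rewrite hm !doubleS addSn addn3.
    by move=> ->; rewrite eqxx ?orbT.
  by move=> ->; rewrite eqxx ?orbT.
by case: (nopar (F := F) (e := n + 4) _ h) => //; rewrite oddD hn.
Qed.


Unset Implicit Arguments. Set Strict Implicit.

Theorem mainTheorem2 (L : finFieldType) (n k t : nat)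
  (hn : odd n) (hk : (0 < k)%N) (hkn : coprime k n)
  (hL : #|L| = (2 ^ n)%N) (ht : t = 2%N \/ t = 3%N)
  (a b c : L) (hb : b != 0) (hc : c != 0) :
  Fw n k t a b c \in
    [:: 0; (2 ^ n.+1./2)%:Z; - (2 ^ n.+1./2)%:Z;
            (2 ^ n.+3./2)%:Z; - (2 ^ n.+3./2)%:Z].
Proof.
have hn0 : (0 < n)%N by case: (n) hn.
have ch2 : 2 \in [pchar L] := card_finPcharP hL (isT : prime 2).
pose tk := (t * k)%N.
have hsq : Fw n k t a b c * Fw n k t a b c =
    (2 ^ n)%:Z * \sum_(u in WW n k tk b c) sg n (ff k tk a b c u) :=
  Fw_sq ch2 hL hn0 k tk a b c.
have [r hr hW] := WW_pow ch2 hL k tk b c.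
have hr4 : (r <= 4)%N.
  case: ht => ht.
    have htk : tk = (2 * k)%N by rewrite /tk ht.
    have := WW_t2 ch2 hL hn0 htk hb hc hkn.
    by rewrite hW leq_exp2l.
  have htk : tk = (3 * k)%N by rewrite /tk ht.
  have := WW_t3 ch2 hL hn0 htk hb hc hkn hn.
  by rewrite hW leq_exp2l // => /leq_trans; apply.
apply: (final hn hr4).
case: (T_cases ch2 hL hn0 k tk a b c) => hT; [left|right]; rewrite hsq hT ?mulr0 //.
by rewrite hW natz.
Qed.
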